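(* (1) There is a saturated structure $\mathfrak A_{\mathrm{sat}}$ of cardinality $2^\omega$ such that $\mathrm{Inv}(\mathrm{Pol}^\omega(\mathfrak A_{\mathrm{sat}}))\neq\langle\mathfrak A_{\mathrm{sat}}\rangle_{\mathrm{pp}}$. (2) There is a saturated structure $\mathfrak A_{\mathrm{sat}}$ of cardinality $2^\omega$ such that $\mathrm{Inv}(\mathrm{Pol}(\mathfrak A_{\mathrm{sat}}))\cap\langle\mathfrak A_{\mathrm{sat}}\rangle_{\mathrm{fo}}\neq\langle\mathfrak A_{\mathrm{sat}}\rangle_{\mathrm{pp}}$. (3) There is a structure $\mathfrak A$ such that $\mathrm{Inv}(\mathrm{Pol}^\omega(\mathfrak A))\cap\langle\mathfrak A\rangle_{\mathrm{fo}}\neq\langle\mathfrak A\rangle_{\mathrm{pp}}$.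
   Context: Structures are over relational signatures (possibly with constants). $\langle\mathfrak A\rangle_{\mathrm{fo}}$, $\langle\mathfrak A\rangle_{\mathrm{pp}}$: relations on $A$ definable without parameters by first-order, resp. primitive positive formulas (built from atoms, equalities, $\bot$ using $\wedge,\exists$). $\mathrm{Pol}(\mathfrak A)$: homomorphisms $\mathfrak A^k\to\mathfrak A$ for finite $k$; $\mathrm{Pol}^\omega(\mathfrak A)$: homomorphisms $\mathfrak A^\kappa\to\mathfrak A$ for $\kappa\le\omega$ (direct powers). $\mathrm{Inv}(F)$: relations on $A$ preserved coordinatewise by all $f\in F$. An infinite structure $\mathfrak A$ is saturated if it is $|A|$-saturated: for every sequence of fewer than $|A|$ parameters, every set of first-order formulas in one free variable over them consistent with the theory of $\mathfrak A$ with these parameters named is realised in $A$. *)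

(* Defs.v *)
From Stdlib Require Import List.
From mathcomp Require Import all_boot.

Set Implicit Arguments.
Unset Strict Implicit.
Unset Printing Implicit Defensive.

Record signature := Signature {
  rsym  : Type;
  arity : rsym -> nat;
  csym  : Type
}.

Record structure (S : signature) := Structure {
  carrier : Type;
  rel : forall R : rsym S, ('I_(arity R) -> carrier) -> Prop;
  cst : csym S -> carrier
}.
Arguments carrier {S} _.
Arguments rel {S} _ R _.
Arguments cst {S} _ c.

(** * First-order formulas; variables are natural numbers, and the terms may
    also contain parameters from a type P (P = Empty_set: no parameters). *)
Inductive term (S : signature) (P : Type) :=
| TVar of nat
| TConst of csym S
| TPar of P.

Inductive formula (S : signature) (P : Type) :=
| FAtom (R : rsym S) of ('I_(arity R) -> term S P)
| FEq of term S P & term S P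
| FBot
| FNeg of formula S P
| FAnd of formula S P & formula S P
| FEx of nat & formula S P.

Arguments TVar {S P}.
Arguments TConst {S P}.
Arguments TPar {S P}.
Arguments FAtom {S P}.
Arguments FEq {S P}.
Arguments FBot {S P}.
Arguments FNeg {S P}.
Arguments FAnd {S P}.
Arguments FEx {S P}.

Section Semantics.
Variables (S : signature) (A : structure S) (P : Type) (pa : P -> carrier A).

Definition eval_term (e : nat -> carrier A) (t : term S P) : carrier A :=
  match t with
  | TVar n => e n
  | TConst c => cst A c
  | TPar p => pa p
  end.

Definition upd (e : nat -> carrier A) (n : nat) (a : carrier A) : nat -> carrier A :=
  fun k => if k == n then a else e k.

Fixpoint sat (e : nat -> carrier A) (phi : formula S P) : Prop :=
  match phi with
  | FAtom R args => rel A R (fun i => eval_term e (args i))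
  | FEq t1 t2 => eval_term e t1 = eval_term e t2
  | FBot => False
  | FNeg psi => ~ sat e psi
  | FAnd psi chi => sat e psi /\ sat e chi
  | FEx n psi => exists a, sat (upd e n a) psi
  end.
End Semantics.

Definition occurs_term S P (k : nat) (t : term S P) : Prop := t = TVar k.

Fixpoint free_in S P (k : nat) (phi : formula S P) : Prop :=
  match phi with
  | FAtom R args => exists i, occurs_term k (args i)
  | FEq t1 t2 => occurs_term k t1 \/ occurs_term k t2
  | FBot => False
  | FNeg psi => free_in k psi
  | FAnd psi chi => free_in k psi \/ free_in k chi
  | FEx n psi => k <> n /\ free_in k psi
  end.

Fixpoint is_pp S P (phi : formula S P) : Prop :=
  match phi with
  | FAtom _ _ | FEq _ _ | FBot => True
  | FNeg _ => False
  | FAnd psi chi => is_pp psi /\ is_pp chi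
  | FEx _ psi => is_pp psi
  end.

Definition no_params {T : Type} : Empty_set -> T := fun x => match x with end.

(** Definability without parameters of an n-ary relation (tuples indexed by
    'I_n, the i-th coordinate being assigned to variable i). *)
Definition fo_definable S (A : structure S) (n : nat)
    (Rel : ('I_n -> carrier A) -> Prop) : Prop :=
  exists phi : formula S Empty_set,
    (forall k, free_in k phi -> k < n) /\
    forall e : nat -> carrier A,
      Rel (fun i => e (nat_of_ord i)) <-> sat (A:=A) no_params e phi.

Definition pp_definable S (A : structure S) (n : nat)
    (Rel : ('I_n -> carrier A) -> Prop) : Prop :=
  exists phi : formula S Empty_set,
    is_pp phi /\
    (forall k, free_in k phi -> k < n) /\
    forall e : nat -> carrier A,
      Rel (fun i => e (nat_of_ord i)) <-> sat (A:=A) no_params e phi.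

Definition preserves {X : Type} (I : Type) (f : (I -> X) -> X) (n : nat)
    (Rel : ('I_n -> X) -> Prop) : Prop :=
  forall t : 'I_n -> I -> X,
    (forall i : I, Rel (fun j => t j i)) -> Rel (fun j => f (t j)).

Definition power_hom S (A : structure S) (I : Type)
    (f : (I -> carrier A) -> carrier A) : Prop :=
  (forall R : rsym S, preserves f (rel A R)) /\
  (forall c : csym S, f (fun _ => cst A c) = cst A c).

(** Pol(A): homomorphisms A^k -> A, k finite (k >= 1);
    Pol^omega(A): homomorphisms A^kappa -> A, 1 <= kappa <= omega. *)
Definition in_Pol S (A : structure S) (k : nat)
    (f : ('I_k -> carrier A) -> carrier A) : Prop :=
  0 < k /\ power_hom f.

Definition in_Pol_omega_infinite S (A : structure S)
    (f : (nat -> carrier A) -> carrier A) : Prop := power_hom f.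

Definition in_Inv_Pol S (A : structure S) (n : nat)
    (Rel : ('I_n -> carrier A) -> Prop) : Prop :=
  forall (k : nat) (f : ('I_k -> carrier A) -> carrier A),
    in_Pol f -> preserves f Rel.

Definition in_Inv_Pol_omega S (A : structure S) (n : nat)
    (Rel : ('I_n -> carrier A) -> Prop) : Prop :=
  in_Inv_Pol Rel /\
  forall f : (nat -> carrier A) -> carrier A,
    in_Pol_omega_infinite f -> preserves f Rel.

Definition card_lt (X Y : Type) : Prop :=
  (exists g : X -> Y, injective g) /\ ~ (exists h : Y -> X, injective h).

Definition is_infinite (X : Type) : Prop := exists g : nat -> X, injective g.

Definition has_card_continuum (X : Type) : Prop :=
  exists f : X -> (nat -> bool), bijective f.

Definition finitely_satisfiable S (A : structure S) (P : Type)
    (pa : P -> carrier A) (Sigma : formula S P -> Prop) : Prop :=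
  forall l : list (formula S P), (forall phi, In phi l -> Sigma phi) ->
    exists a : carrier A, forall phi, In phi l -> sat (A:=A) pa (fun _ => a) phi.

(** |A|-saturated: for every set X of parameters of cardinality < |A|, every set
    of formulas in the single free variable 0 over X which is consistent with
    Th(A, X) (i.e. finitely satisfiable in A) is realised in A. *)
Definition saturated S (A : structure S) : Prop :=
  is_infinite (carrier A) /\
  forall (X : carrier A -> Prop),
    card_lt {x : carrier A | X x} (carrier A) ->
    forall Sigma : formula S {x : carrier A | X x} -> Prop,
      (forall phi, Sigma phi -> forall k, free_in k phi -> k = 0) ->
      finitely_satisfiable (@proj1_sig _ X) Sigma ->
      exists a : carrier A,
        forall phi, Sigma phi -> sat (A:=A) (@proj1_sig _ X) (fun _ => a) phi.

(* Main.v *)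
Require Import Defs.
From Stdlib Require Import List.
From mathcomp Require Import all_boot.
From Stdlib Require Import Classical ClassicalEpsilon FunctionalExtensionality PropExtensionality.

Set Implicit Arguments.
Unset Strict Implicit.
Unset Printing Implicit Defensive.



Section PP.
Variables (S : signature) (A : structure S) (P : Type) (pa : P -> carrier A).
Variables (I : Type) (i0 : I) (f : (I -> carrier A) -> carrier A).
Hypothesis Hc : forall c, f (fun _ => cst A c) = cst A c.
Hypothesis Hp : forall p, f (fun _ => pa p) = pa p.

Fixpoint atoms_pres (phi : formula S P) : Prop :=
  match phi with
  | FAtom r _ => preserves f (Defs.rel A r)
  | FNeg psi => atoms_pres psi
  | FAnd a b => atoms_pres a /\ atoms_pres b
  | FEx _ psi => atoms_pres psi
  | _ => True
  end.

Lemma eval_f (t : nat -> I -> carrier A) tm :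
  eval_term pa (fun n => f (t n)) tm = f (fun i => eval_term pa (fun n => t n i) tm).
Proof. by case: tm => [v|c|p] /=; rewrite ?Hc ?Hp. Qed.

Lemma pp_pres phi : is_pp phi -> atoms_pres phi ->
  forall t : nat -> I -> carrier A,
  (forall i, sat pa (fun n => t n i) phi) -> sat pa (fun n => f (t n)) phi.
Proof.
elim: phi => [r args|t1 t2||psi IH|a IHa b IHb|m psi IH] //= Hpp Hat t H.
- have -> : (fun i => eval_term pa (fun n => f (t n)) (args i)) =
    (fun j => f (fun i => eval_term pa (fun n => t n i) (args j))).
    by apply: functional_extensionality => j; rewrite eval_f.
  exact: Hat.
- rewrite !eval_f; congr f; apply: functional_extensionality => i; exact: H.
- case: Hpp => Ha Hb; case: Hat => Ha' Hb'; split.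
  + apply: IHa => // i; exact: (proj1 (H i)).
  + apply: IHb => // i; exact: (proj2 (H i)).
- have H' : forall i, {x | sat pa (upd (fun n => t n i) m x) psi}.
    move=> i; apply: constructive_indefinite_description; exact: H.
  pose a := fun i => proj1_sig (H' i).
  exists (f a).
  pose t' := fun n => if n == m then a else t n.
  have -> : upd (fun n => f (t n)) m (f a) = (fun n => f (t' n)).
    apply: functional_extensionality => n; rewrite /upd /t'; by case: (n == m).
  apply: IH => // i.
  have -> : (fun n => t' n i) = upd (fun n => t n i) m (a i).
    apply: functional_extensionality => n; rewrite /upd /t'; by case: (n == m).
  exact: (proj2_sig (H' i)).
Qed.
End PP.

Lemma atoms_pres_hom S (A : structure S) P I (f : (I -> carrier A) -> carrier A) :
  power_hom f -> forall phi : formula S P, atoms_pres f phi.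
Proof. move=> [Hr _]; elim=> //= *; tauto. Qed.

Lemma pp_def_pres S (A : structure S) n (Rel : ('I_n -> carrier A) -> Prop)
  (phi : formula S Empty_set) (a0 : carrier A) I (i0 : I) (f : (I -> carrier A) -> carrier A) :
  is_pp phi ->
  (forall e : nat -> carrier A, Rel (fun i => e (nat_of_ord i)) <-> sat (A:=A) no_params e phi) ->
  (forall c, f (fun _ => cst A c) = cst A c) ->
  atoms_pres f phi ->
  forall t : 'I_n -> I -> carrier A, (forall i, Rel (fun j => t j i)) -> Rel (fun j => f (t j)).
Proof.
move=> Hpp Hdef Hc Hat t Ht.
pose T := fun m : nat => match insub m with Some j => t j | None => fun _ => a0 end.
have TE : forall j : 'I_n, T j = t j by move=> j; rewrite /T valK.
have -> : (fun j => f (t j)) = (fun j : 'I_n => f (T j)).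
  by apply: functional_extensionality => j; rewrite TE.
apply (proj2 (Hdef (fun m => f (T m)))); apply: pp_pres => //.
- move=> i; apply (proj1 (Hdef (fun m => T m i))).
  have -> : (fun j : 'I_n => T j i) = (fun j => t j i).
    by apply: functional_extensionality => j; rewrite TE.
  exact: Ht.
Qed.




Definition T := nat -> bool.

Definition inter (p : T * T) : T := fun n => if odd n then p.2 n./2 else p.1 n./2.
Definition uninter (u : T) : T * T := (fun m => u m.*2, fun m => u m.*2.+1).

Lemma interK : cancel inter uninter.
Proof.
case=> a b; rewrite /inter /uninter /=; congr pair; apply: functional_extensionality => m /=.
- by rewrite odd_double half_double.
- by rewrite /= odd_double /= uphalf_double.
Qed.

Lemma uninterK : cancel uninter inter.
Proof.
move=> u; apply: functional_extensionality => n; rewrite /inter /uninter /=.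
case Ho: (odd n) => /=; congr u; by rewrite -[RHS](odd_double_half n) Ho.
Qed.

Lemma inter_inj : injective inter. Proof. exact: can_inj interK. Qed.

(* compactness of Cantor space for locally determined predicates *)
Section Compact.
Variables (F : Type) (Sg : F -> Prop) (D : F -> T -> Prop) (B : F -> nat).
Hypothesis Dloc : forall phi l l', (forall n, n < B phi -> l n = l' n) -> D phi l -> D phi l'.

Definition good (q : T) (k : nat) :=
  forall Psi : list F, (forall phi, In phi Psi -> Sg phi) ->
    exists l : T, (forall i, i < k -> l i = q i) /\ forall phi, In phi Psi -> D phi l.

Definition setb (q : T) k (b : bool) : T := fun i => if i == k then b else q i.

Lemma good_step q k : good q k -> good (setb q k false) k.+1 \/ good (setb q k true) k.+1.
Proof.
move=> Hg; apply: NNPP => Hn.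
have [H0 H1] : ~ good (setb q k false) k.+1 /\ ~ good (setb q k true) k.+1 by tauto.
rewrite /good in H0 H1.
have [Psi0 H0'] := not_all_ex_not _ _ H0.
have [HP0 HN0] := imply_to_and _ _ H0'.
have [Psi1 H1'] := not_all_ex_not _ _ H1.
have [HP1 HN1] := imply_to_and _ _ H1'.
have [|l [Hl HD]] := Hg (Psi0 ++ Psi1).
  by move=> phi Hin; case: (in_app_or _ _ _ Hin) => ?; [apply: HP0|apply: HP1].
have Hext : forall b, l k = b -> forall i, i < k.+1 -> l i = setb q k b i.
  move=> b Hb i; rewrite ltnS leq_eqVlt /setb; case: eqP => [->|_] //= /Hl //.
case Hb: (l k).
- apply: HN1; exists l; split; first exact: Hext.
  by move=> phi Hphi; apply: HD; apply: in_or_app; right.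
- apply: HN0; exists l; split; first exact: Hext.
  by move=> phi Hphi; apply: HD; apply: in_or_app; left.
Qed.

Definition pickb (Q : Prop) : bool := if excluded_middle_informative Q then true else false.

Fixpoint qs (k : nat) : T :=
  match k with
  | 0 => fun _ => false
  | k'.+1 => setb (qs k') k' (~~ pickb (good (setb (qs k') k' false) k'.+1))
  end.

Lemma qs_good : good (qs 0) 0 -> forall k, good (qs k) k.
Proof.
move=> H0; elim=> // k IH /=; rewrite /pickb.
case: excluded_middle_informative => //= Hg.
by case: (good_step IH).
Qed.

Lemma qs_stable k i : i < k -> qs k.+1 i = qs k i.
Proof. by move=> Hi /=; rewrite /setb; case: eqP => // Hik; rewrite Hik ltnn in Hi. Qed.

Lemma qs_stable2 k m i : i < k -> k <= m -> qs m i = qs k i.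
Proof.
move=> Hi; elim: m => [|m IH]; first by rewrite leqn0 => /eqP ->.
rewrite leq_eqVlt => /orP [/eqP <- //|]; rewrite ltnS => Hkm.
by rewrite qs_stable ?IH //; apply: leq_trans Hkm.
Qed.

Lemma compact :
  (forall Psi : list F, (forall phi, In phi Psi -> Sg phi) ->
    exists l, forall phi, In phi Psi -> D phi l) ->
  exists l, forall phi, Sg phi -> D phi l.
Proof.
move=> Hfs.
have G0 : good (qs 0) 0.
  move=> Psi HPsi; have [l Hl] := Hfs Psi HPsi; by exists l.
pose l := fun i => qs i.+1 i.
have Hl : forall k i, i < k -> l i = qs k i.
  move=> k i Hi; rewrite /l; symmetry; exact: qs_stable2.
exists l => phi Hphi.
have [|l' [Hl' HD]] := @qs_good G0 (B phi) [:: phi].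
  by move=> psi [<-|[]].
apply: (Dloc (l := l')); last by apply: HD; left.
by move=> n Hn; rewrite Hl' // (Hl (B phi)).
Qed.
End Compact.



Section Label.
Variables (rs : Type) (ar : rs -> nat) (interp : forall r, ('I_(ar r) -> T) -> Prop) (bd : rs -> nat).
Hypothesis Hbd : forall r (l l' : 'I_(ar r) -> T),
  (forall i n, n < bd r -> l i n = l' i n) -> interp l -> interp l'.

Definition LSig := @Signature rs ar Empty_set.
Definition LA : structure LSig :=
  @Structure LSig (T * T) (fun r t => interp (fun i => (t i).1)) (fun c => match c with end).

Lemma LA_card : has_card_continuum (carrier LA).
Proof. exists inter; exists uninter; [exact: interK | exact: uninterK]. Qed.

Section Inv.
Variables (P : Type) (pa : P -> carrier LA).

Fixpoint fbd (phi : formula LSig P) : nat :=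
  match phi with
  | FAtom r _ => bd r
  | FNeg psi => fbd psi
  | FAnd a b => maxn (fbd a) (fbd b)
  | FEx _ psi => fbd psi
  | _ => 0
  end.

Definition tpars (t : term LSig P) : list P := match t with TPar p => p :: nil | _ => nil end.

Fixpoint fpars (phi : formula LSig P) : list P :=
  match phi with
  | FAtom r args => flat_map (fun i => tpars (args i)) (enum 'I_(ar r))
  | FEq t1 t2 => tpars t1 ++ tpars t2
  | FNeg psi => fpars psi
  | FAnd a b => fpars a ++ fpars b
  | FEx _ psi => fpars psi
  | FBot => nil
  end.

Definition sim N (L : list P) (e e' : nat -> carrier LA) :=
  (forall i j, e i = e j <-> e' i = e' j) /\
  (forall i p, In p L -> (e i = pa p <-> e' i = pa p)) /\
  (forall i n, n < N -> (e i).1 n = (e' i).1 n).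

Lemma sim_sym N L e e' : sim N L e e' -> sim N L e' e.
Proof.
case=> [H1 [H2 H3]]; split; [|split].
- move=> i j; by rewrite H1.
- move=> i p Hp; by rewrite H2.
- move=> i n Hn; by rewrite H3.
Qed.

Lemma sim_upd N L e e' n a a' : sim N L e e' ->
  (forall j, j <> n -> (a = e j <-> a' = e' j)) ->
  (forall p, In p L -> (a = pa p <-> a' = pa p)) ->
  (forall m, m < N -> a.1 m = a'.1 m) ->
  sim N L (upd e n a) (upd e' n a').
Proof.
case=> [H1 [H2 H3]] K1 K2 K3; rewrite /upd; split; [|split].
- move=> i j; case: eqP => Hi; case: eqP => Hj //.
  + exact: K1.
  + split => H; symmetry; apply/(K1 i Hi); by symmetry.
- move=> i p Hp; case: eqP => Hi //; [exact: K2|exact: H2].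
- move=> i m Hm; case: eqP => Hi //; [exact: K3|exact: H3].
Qed.

Lemma in_nth_ex (x : carrier LA) (L : list (carrier LA)) d :
  In x L -> exists m, m < size L /\ nth d L m = x.
Proof.
elim: L => [|y L IH] //= [->|/IH [m [Hm Hn]]]; first by exists 0.
by exists m.+1.
Qed.

Lemma fresh (l : T) (h : nat -> carrier LA) (L : list (carrier LA)) :
  exists a', a'.1 = l /\ (forall i, a' <> h i) /\ (forall x, In x L -> a' <> x).
Proof.
pose b := fun m => if m < size L then nth (h 0) L m else h (m - size L).
pose tag := fun m => ~~ (b m).2 m.
have Hb : forall x, b = b -> forall m, x = b m -> (l, tag) <> x.
  move=> x _ m -> E; have := congr1 (fun z => z.2 m) E; rewrite /= /tag.
  by case: ((b m).2 m).
exists (l, tag); split => //; split.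
- move=> i; apply: (Hb _ erefl (i + size L)).
  by rewrite /b ltnNge leq_addl /= addnK.
- move=> x /(in_nth_ex (h 0)) [m [Hm <-]]; apply: (Hb _ erefl m).
  by rewrite /b Hm.
Qed.

Lemma sat_inv phi : forall N L e e', fbd phi <= N -> incl (fpars phi) L ->
  sim N L e e' -> sat pa e phi -> sat pa e' phi.
Proof.
elim: phi => [r args|t1 t2||psi IH|a IHa b IHb|m psi IH] N L e e' HN HL Hs //=.
- apply: Hbd => i n Hn.
  case: Hs => [_ [_ H3]]; case E: (args i) => [v|c|p] /=.
  + apply: H3; exact: leq_trans Hn HN.
  + case: c.
  + by [].
- case: Hs => [H1 [H2 _]]; clear HN.
  move: HL; case: t1 => [v|c|p]; case: t2 => [w|c'|q] => //= HL; try (case: c); try (case: c').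
  + by rewrite H1.
  + by rewrite H2 //; apply: HL; left.
  + by move=> E; symmetry; apply/(H2 w p); [apply: HL; left | symmetry].
- move=> Hn Hs'; apply: Hn; apply: (IH N L e' e) => //; exact: sim_sym.
- have Ha : fbd a <= N by apply: leq_trans HN; exact: leq_maxl.
  have Hb : fbd b <= N by apply: leq_trans HN; exact: leq_maxr.
  case=> Sa Sb; split.
  + apply: (IHa N L e e') => // x Hx; apply: HL; apply: in_or_app; by left.
  + apply: (IHb N L e e') => // x Hx; apply: HL; apply: in_or_app; by right.
- case=> x Hx.
  case: Hs => [H1 [H2 H3]].
  have Hs : sim N L e e' by [].
  case: (classic (exists i, i <> m /\ e i = x)) => [[i [Him Hi]]|Na].
    exists (e' i); apply: (IH N L (upd e m x)) => //.
    apply: sim_upd => //.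
    - move=> j Hj; rewrite -Hi; exact: H1.
    - move=> p Hp; rewrite -Hi; exact: H2.
    - move=> n Hn; rewrite -Hi; exact: H3.
  case: (classic (exists p, In p L /\ pa p = x)) => [[p [Hp Hpx]]|Nb].
    exists (pa p); apply: (IH N L (upd e m x)) => //.
    apply: sim_upd => //.
    - move=> j Hj; rewrite -Hpx; split => E; symmetry; apply/(H2 j p Hp); by symmetry.
    - by move=> q Hq; rewrite -Hpx.
    - by move=> n Hn; rewrite -Hpx.
  have [x' [Hx1 [Hx2 Hx3]]] := fresh x.1 e' (map pa L).
  exists x'; apply: (IH N L (upd e m x)) => //.
  apply: sim_upd => //.
  - move=> j Hj; split => E.
    + exfalso; apply: Na; exists j; split => //; by symmetry.
    + exfalso; exact: (Hx2 j).
  - move=> p Hp; split => E.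
    + exfalso; apply: Nb; exists p; split => //; by symmetry.
    + exfalso; apply: (Hx3 (pa p)) => //; exact: in_map.
  - by move=> n Hn; rewrite Hx1.
Qed.
End Inv.

Lemma incl_flat P (phi : formula LSig P) Psi : In phi Psi -> incl (fpars phi) (flat_map (@fpars P) Psi).
Proof. move=> Hin x Hx; apply/in_flat_map; by exists phi. Qed.

Theorem LA_saturated : saturated LA.
Proof.
split.
  exists (fun n => ((fun _ => false), (fun m => m == n))) => n m E.
  have := congr1 (fun z => z.2 n) E; rewrite /= eqxx => /esym /eqP; by [].
move=> X [_ Hcard] Sigma _ HFS.
pose P := {x : carrier LA | X x}%type.
pose pa := @proj1_sig _ X : P -> carrier LA.
have HX : forall l : T, exists c : carrier LA, c.1 = l /\ ~ X c.
  move=> l; apply: NNPP => Hn; apply: Hcard.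
  have Hall : forall u, X (l, u).
    move=> u; apply: NNPP => Hu; apply: Hn; by exists (l, u).
  exists (fun z => exist X (l, inter z) (Hall (inter z))) => z z' E.
  apply: inter_inj; have := congr1 (fun w => (proj1_sig w).2) E; by [].
pose c := fun l => proj1_sig (constructive_indefinite_description _ (HX l)).
have Hc1 : forall l, (c l).1 = l by move=> l; exact: (proj1 (proj2_sig (constructive_indefinite_description _ (HX l)))).
have Hc2 : forall l, ~ X (c l) by move=> l; exact: (proj2 (proj2_sig (constructive_indefinite_description _ (HX l)))).
have Hpa : forall p l, c l <> pa p.
  move=> p l E; apply: (Hc2 l); rewrite E; exact: (proj2_sig p).
pose D := fun phi l => sat pa (fun _ => c l) phi.
have Dloc : forall phi l l', (forall n, n < fbd phi -> l n = l' n) -> D phi l -> D phi l'.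
  move=> phi l l' Hll; apply: (@sat_inv P pa phi (fbd phi) (fpars phi)) => //.
  split; [|split].
  - by [].
  - by move=> i p _; split => E; exfalso; apply: (Hpa p) E.
  - by move=> i n Hn; rewrite !Hc1; exact: Hll.
case: (classic (exists l, forall phi, Sigma phi -> D phi l)) => [[l Hl]|Nl].
  by exists (c l).
have [Psi [HPsi HNPsi]] : exists Psi, (forall phi, In phi Psi -> Sigma phi) /\ forall l, ~ (forall phi, In phi Psi -> D phi l).
  apply: NNPP => Hn; apply: Nl; apply: (compact Dloc) => Psi HPsi.
  apply: NNPP => Hn2; apply: Hn; exists Psi; split => // l Hl; apply: Hn2; by exists l.
set G := flat_map (@fpars P) Psi.
have HG : forall a, (forall phi, In phi Psi -> sat pa (fun _ => a) phi) -> exists p, In p G /\ a = pa p.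
  move=> a Ha; apply: NNPP => Hn; apply: (HNPsi a.1) => phi Hphi.
  apply: (@sat_inv P pa phi (fbd phi) (fpars phi) (fun _ => a)) => //; last exact: Ha.
  split; [|split].
  - by [].
  - move=> i p Hp; split => E; exfalso.
    + apply: Hn; exists p; split => //; exact: (incl_flat Hphi).
    + exact: (Hpa p) E.
  - by move=> i n Hn'; rewrite Hc1.
case: (classic (exists p, In p G /\ forall phi, Sigma phi -> sat pa (fun _ => pa p) phi)) => [[p [_ Hp]]|Np].
  by exists (pa p).
have [phi0 Hphi0] : exists phi0, Sigma phi0.
  apply: NNPP => Hn; apply: (HNPsi (fun _ => false)) => phi Hphi; exfalso; apply: Hn.
  by exists phi; apply: HPsi.
have Hch : forall p, exists phi, Sigma phi /\ (In p G -> ~ sat pa (fun _ => pa p) phi).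
  move=> p; case: (classic (In p G)) => Hp; last by exists phi0.
  apply: NNPP => Hn; apply: Np; exists p; split => // phi Hs; apply: NNPP => Hns.
  apply: Hn; exists phi; split => //.
pose ch := fun p => proj1_sig (constructive_indefinite_description _ (Hch p)).
have Hch1 : forall p, Sigma (ch p) by move=> p; exact: (proj1 (proj2_sig (constructive_indefinite_description _ (Hch p)))).
have Hch2 : forall p, In p G -> ~ sat pa (fun _ => pa p) (ch p) by move=> p; exact: (proj2 (proj2_sig (constructive_indefinite_description _ (Hch p)))).
have [|a Ha] := HFS (Psi ++ map ch G).
  move=> phi Hin; case: (in_app_or _ _ _ Hin) => [|/in_map_iff [p [<- _]]]; [exact: HPsi | exact: Hch1].
have [|p [Hp Hap]] := HG a.
  move=> phi Hphi; apply: Ha; apply: in_or_app; by left.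
exfalso; apply: (Hch2 p Hp); rewrite -Hap; apply: Ha; apply: in_or_app; right; exact: in_map.
Qed.
End Label.



Definition ar1 := fun _ : nat => 2.
Definition interp1 (r : nat) (l : 'I_(ar1 r) -> T) : Prop := l ord0 r = l ord_max r.
Definition bd1 (r : nat) := r.+1.
Lemma Hbd1 r (l l' : 'I_(ar1 r) -> T) :
  (forall i n, n < bd1 r -> l i n = l' i n) -> interp1 l -> interp1 l'.
Proof. by move=> H; rewrite /interp1 -!H. Qed.

Definition A1 := LA interp1.
Definition R1 (t : 'I_2 -> carrier A1) : Prop := forall n, (t ord0).1 n = (t ord_max).1 n.

Lemma R1_pres I (f : (I -> carrier A1) -> carrier A1) : power_hom f -> preserves f R1.
Proof. move=> [Hr _] t Ht n; exact: (Hr n t (fun i => Ht i n)). Qed.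

Fixpoint rbd1 P (phi : formula (LSig ar1) P) : nat :=
  match phi with
  | FAtom r _ => r.+1
  | FNeg psi => rbd1 psi
  | FAnd a b => maxn (rbd1 a) (rbd1 b)
  | FEx _ psi => rbd1 psi
  | _ => 0
  end.

Lemma atoms_rbd1 P I (g : (I -> carrier A1) -> carrier A1) N :
  (forall r, r < N -> preserves g (Defs.rel A1 r)) ->
  forall phi : formula (LSig ar1) P, rbd1 phi <= N -> atoms_pres g phi.
Proof.
move=> Hg; elim=> [r _|t1 t2||psi IH|a IHa b IHb|m psi IH] /= H //.
- exact: Hg.
- exact: IH.
- by rewrite geq_max in H; case/andP: H => Ha Hb; split; [apply: IHa|apply: IHb].
- exact: IH.
Qed.

Lemma part1 : exists (S : signature) (A : structure S),
      saturated A /\ has_card_continuum (carrier A) /\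
      ~ (forall (n : nat) (Rel : ('I_n -> carrier A) -> Prop),
            in_Inv_Pol_omega Rel <-> pp_definable Rel).
Proof.
exists (LSig ar1), A1; split; first exact: (LA_saturated Hbd1).
split; first exact: LA_card.
move=> H; have [phi [Hpp [_ Hdef]]] : pp_definable R1.
  apply/H; split; first by move=> k f [_ Hf]; exact: R1_pres.
  move=> f Hf; exact: R1_pres.
pose N := rbd1 phi.
pose g := fun s : unit -> carrier A1 =>
  ((fun m => if m == N then (s tt).2 0 else (s tt).1 m), (s tt).2) : carrier A1.
pose tau := fun (j : 'I_2) (_ : unit) => ((fun _ : nat => false), (fun _ : nat => val j == 1)) : carrier A1.
have Hv : R1 (fun j => g (tau j)).
  apply: (@pp_def_pres _ A1 2 R1 phi (tau ord0 tt) unit tt g Hpp Hdef).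
  - by case.
  - apply: (atoms_rbd1 (N := N)) => // r Hr t Ht /=.
    have HrN : (r == N) = false by apply/negbTE; rewrite neq_ltn Hr.
    rewrite /interp1 /= HrN; exact: (Ht tt).
  - by move=> i n.
have := Hv N; by rewrite /= eqxx.
Qed.

Definition ar2 := fun _ : (nat * T)%type => 1.
Definition interp2 (r : (nat * T)%type) (l : 'I_(ar2 r) -> T) : Prop :=
  l ord0 0 = true /\ exists j, j < r.1 /\ l ord0 j.+1 <> r.2 j.
Definition bd2 (r : (nat * T)%type) := r.1.+1.
Lemma Hbd2 r (l l' : 'I_(ar2 r) -> T) :
  (forall i n, n < bd2 r -> l i n = l' i n) -> interp2 l -> interp2 l'.
Proof.
move=> H [H0 [j [Hj Hn]]]; split; first by rewrite -H.
exists j; split => //; rewrite -H //; by rewrite /bd2 ltnS.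
Qed.

Definition A2 := LA interp2.
Definition R2 (t : 'I_1 -> carrier A2) : Prop := (t ord0).1 0 = true.

Lemma part2 : exists (S : signature) (A : structure S),
      saturated A /\ has_card_continuum (carrier A) /\
      ~ (forall (n : nat) (Rel : ('I_n -> carrier A) -> Prop),
            (in_Inv_Pol Rel /\ fo_definable Rel) <-> pp_definable Rel).
Proof.
exists (LSig ar2), A2; split; first exact: (LA_saturated Hbd2).
split; first exact: LA_card.
move=> H; have [phi [Hpp [_ Hdef]]] : pp_definable R2.
  apply: (proj1 (H 1 R2)); split.
  - move=> [|k] f [Hk [Hr _]] t Ht //.
    pose sg := fun m => ~~ (t ord0 (inord m)).1 m.+1.
    have Hp : interp2 (r := (k.+1, sg)) (fun j => (f (t j)).1).
      refine (Hr (k.+1, sg) t _) => i.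
      split; first exact: (Ht i).
      exists (val i); split; first exact: ltn_ord.
      rewrite /= /sg inord_val; by case: ((t ord0 i).1 i.+1).
    exact: (proj1 Hp).
  - pose args := fun _ : 'I_1 => @TVar (LSig ar2) Empty_set 0.
    exists (FNeg (FAnd (FNeg (FAtom ((1, fun _ => true) : rsym (LSig ar2)) args))
                       (FNeg (FAtom ((1, fun _ => false) : rsym (LSig ar2)) args)))).
    split.
    + move=> k /= [[i Hi]|[i Hi]]; move: Hi; rewrite /occurs_term /args => -[<-] //.
    + move=> e; rewrite /R2 /= /interp2 /=; split.
      * move=> H0 [Hn1 Hn2].
        case E: ((e 0).1 1).
        -- apply: Hn2; split => //; exists 0; split => //; by rewrite E.
        -- apply: Hn1; split => //; exists 0; split => //; by rewrite E.
      * move=> Hn; apply: NNPP => H0; apply: Hn; split; case; by [].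
pose tau := fun (_ : 'I_1) (s : T) =>
  ((fun m => if m is m'.+1 then s m' else true), (fun _ : nat => false)) : carrier A2.
pose z0 := ((fun _ : nat => false), (fun _ : nat => false)) : carrier A2.
pose f := fun s : T -> carrier A2 =>
  if excluded_middle_informative (exists r, forall i, interp2 (r := r) (fun _ => (s i).1))
  then s (fun _ => false) else z0.
have Hv : R2 (fun j => f (tau j)).
  apply: (@pp_def_pres _ A2 1 R2 phi z0 T (fun _ => false) f Hpp Hdef).
  - by case.
  - apply: atoms_pres_hom; split; last by case.
    move=> r t Ht; change (interp2 (r := r) (fun _ => (f (t ord0)).1)).
    rewrite /f; case: excluded_middle_informative => Hx.
    + exact: (Ht (fun _ => false)).
    + exfalso; apply: Hx; exists r; exact: Ht.
  - by move=> i.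
move: Hv; rewrite /R2 /f; case: excluded_middle_informative => //.
move=> [[k s'] Hr] _; have [_ [j [_ Hj]]] := Hr s'; by apply: Hj.
Qed.

Definition cnt (X : T -> Prop) : Prop :=
  exists g : T -> nat, forall a b, X a -> X b -> g a = g b -> a = b.

Lemma cnt_sub (x y : T -> Prop) : cnt y -> (forall z, x z -> y z) -> cnt x.
Proof. move=> [g Hg] Hxy; exists g => a b Ha Hb; apply: Hg; by apply: Hxy. Qed.

Lemma not_cnt_full : ~ cnt (fun _ => True).
Proof.
move=> [g Hg].
pose s := fun m : nat => match excluded_middle_informative (exists x, g x = m) with
  | left H => proj1_sig (constructive_indefinite_description _ H)
  | right _ => fun _ : nat => false end.
pose d := fun m => ~~ s m m.
have E : s (g d) = d.
  rewrite /s; case: excluded_middle_informative => H.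
  - case: (constructive_indefinite_description _ H) => x Hx /=; exact: Hg.
  - exfalso; apply: H; by exists d.
have : d (g d) = ~~ s (g d) (g d) by [].
rewrite E; by case: (d (g d)).
Qed.

Lemma cnt_union I (iota : I -> nat) (Hi : injective iota) (F : I -> T -> Prop) :
  (forall i, cnt (F i)) -> cnt (fun y => exists i, F i y).
Proof.
move=> HF.
pose G := fun i => constructive_indefinite_description _ (HF i).
pose code := fun y => match excluded_middle_informative (exists i, F i y) with
  | left H => let i := proj1_sig (constructive_indefinite_description _ H) in
              pickle (iota i, proj1_sig (G i) y)
  | right _ => 0 end.
exists code => y y' Hy Hy'; rewrite /code.
case: excluded_middle_informative => H //; case: excluded_middle_informative => H' //.
case: (constructive_indefinite_description _ H) => i Hiy /=.
case: (constructive_indefinite_description _ H') => i' Hiy' /=.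
move/(pcan_inj pickleK) => [/Hi Eii].
move: Hiy'; rewrite -Eii => Hiy' Eg.
exact: (proj2_sig (G i) y y' Hiy Hiy' Eg).
Qed.

Definition Le (x y : T -> Prop) : Prop := (forall z, x z -> y z) \/ ~ cnt y.
Definition Sig3 := @Signature unit (fun _ => 2) {X : T -> Prop | cnt X}.
Definition A3 : structure Sig3 :=
  @Structure Sig3 (T -> Prop) (fun _ t => Le (t ord0) (t ord_max)) (fun c => proj1_sig c).
Definition R3 (t : 'I_1 -> carrier A3) : Prop := cnt (t ord0).

Lemma R3_pres I (iota : I -> nat) (Hi : injective iota) (f : (I -> carrier A3) -> carrier A3) :
  power_hom f -> preserves f R3.
Proof.
move=> [Hr Hc] t Ht.
pose U := fun y => exists i, t ord0 i y.
have HU : cnt U by apply: (cnt_union Hi).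
pose t' := fun j : 'I_2 => if val j == 0 then t ord0 else fun _ => U.
have := Hr tt t'; case.
  move=> i; left => z Hz; by exists i.
- move=> Hsub; rewrite /R3; apply: (cnt_sub HU) => z Hz; move: (Hsub z Hz).
  by rewrite /= (Hc (exist _ U HU)).
- by rewrite /= (Hc (exist _ U HU)).
Qed.

Lemma part3 : exists (S : signature) (A : structure S),
      ~ (forall (n : nat) (Rel : ('I_n -> carrier A) -> Prop),
            (in_Inv_Pol_omega Rel /\ fo_definable Rel) <-> pp_definable Rel).
Proof.
exists Sig3, A3 => H.
have [phi [Hpp [_ Hdef]]] : pp_definable R3.
  apply: (proj1 (H 1 R3)); split; first split.
  - move=> k f [_ Hf]; apply: (R3_pres (iota := val)) => //; exact: val_inj.
  - move=> f Hf; apply: (R3_pres (iota := id)) => //.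
  - pose args := fun j : 'I_2 => if val j == 0 then @TVar Sig3 Empty_set 1 else TVar 0.
    exists (FEx 1 (FNeg (FAtom (tt : rsym Sig3) args))); split.
    + move=> k /= [Hk1 [i Hi]]; move: Hi; rewrite /occurs_term /args.
      case: (val i == 0) => -[Ek]; [by rewrite Ek in Hk1 | by rewrite Ek].
    + move=> e; rewrite /R3 /=; split.
      * move=> Hc; exists (fun _ => True); rewrite /upd /=; case.
        -- move=> Hsub; apply: not_cnt_full; exact: (cnt_sub Hc).
        -- by [].
      * move=> [a Ha]; apply: NNPP => Hn; apply: Ha; right; exact: Hn.
pose tau := fun (_ : 'I_1) (x : T) => (fun y : T => y = x) : carrier A3.
pose f := fun s : T -> carrier A3 => (fun y : T => exists x, s x y) : carrier A3.
have Hv : R3 (fun j => f (tau j)).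
  apply: (@pp_def_pres _ A3 1 R3 phi (fun _ => True) T (fun _ => false) f Hpp Hdef).
  - move=> c; apply: functional_extensionality => y; apply: propositional_extensionality.
    split; [by case | by exists (fun _ => false)].
  - apply: atoms_pres_hom; split.
    + move=> r t Ht; rewrite /= /Le.
      case: (classic (cnt (f (t ord_max)))) => Hc; last by right.
      left => z [x Hx]; exists x.
      case: (Ht x) => [Hs|Hn]; first exact: Hs.
      exfalso; apply: Hn; apply: (cnt_sub Hc) => w Hw; by exists x.
    + move=> c; apply: functional_extensionality => y; apply: propositional_extensionality.
      split; [by case | by exists (fun _ => false)].
  - move=> i; exists (fun _ => 0) => a b -> -> //.
apply: not_cnt_full; apply: (cnt_sub Hv) => y _; by exists y.
Qed.

Theorem proposition5 :
  (* (1) *)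
  (exists (S : signature) (A : structure S),
      saturated A /\ has_card_continuum (carrier A) /\
      ~ (forall (n : nat) (Rel : ('I_n -> carrier A) -> Prop),
            in_Inv_Pol_omega Rel <-> pp_definable Rel)) /\
  (* (2) *)
  (exists (S : signature) (A : structure S),
      saturated A /\ has_card_continuum (carrier A) /\
      ~ (forall (n : nat) (Rel : ('I_n -> carrier A) -> Prop),
            (in_Inv_Pol Rel /\ fo_definable Rel) <-> pp_definable Rel)) /\
  (* (3) *)
  (exists (S : signature) (A : structure S),
      ~ (forall (n : nat) (Rel : ('I_n -> carrier A) -> Prop),
            (in_Inv_Pol_omega Rel /\ fo_definable Rel) <-> pp_definable Rel)).
Proof. split; [exact: part1 | split; [exact: part2 | exact: part3]]. Qed.
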